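(* For every $d\ge0$ there exists $\beta=\beta(d)$ such that for all integers $n\ge \max(1,d)$ and $k\ge 2$, and every $\delta\ge 1+1/\ln k$ such that $\delta k$ is an integer, if $G_n\sim G(n,d/n)$ then $$\Pr\big[s_k(G_n,\delta k)\ge \beta^k\big]\le 2^{-k}.$$
   Context: $G(n,p)$ is the random graph on $[n]$ with each edge present independently with probability $p$. For a graph $G$, $k\ge1$ and $j\ge0$, $s_k(G,j)$ is the number of unlabeled (isomorphism classes of) subgraphs of $G$ with exactly $k$ vertices and $j$ edges. *)

(* Defs.v *)
From HB Require Import structures.
From mathcomp Require Import all_boot all_order all_algebra.
From mathcomp Require Import all_classical all_reals all_analysis.
Set Implicit Arguments. Unset Strict Implicit. Unset Printing Implicit Defensive.
Import Order.TTheory GRing.Theory Num.Theory.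
Local Open Scope ring_scope.

(* A simple graph on [n] = 'I_n is given by its edge set, a set of
   2-element subsets of 'I_n. *)
Definition all_pairs (n : nat) : {set {set 'I_n}} :=
  [set e : {set 'I_n} | #|e| == 2%N].

(* Probability of the graph with edge set E under G(n,p) (E must be a
   subset of all_pairs n). *)
Definition gnp_weight (R : realType) (n : nat) (p : R) (E : {set {set 'I_n}}) : R :=
  p ^+ #|E| * (1 - p) ^+ (#|all_pairs n| - #|E|).

Definition gnp_prob (R : realType) (n : nat) (p : R)
    (A : {set {set 'I_n}} -> bool) : R :=
  \sum_(E in powerset (all_pairs n) | A E) gnp_weight p E.

Definition subgraphs (n : nat) (E : {set {set 'I_n}}) (k j : nat)
    : {set {set 'I_n} * {set {set 'I_n}}} :=
  [set VF : {set 'I_n} * {set {set 'I_n}} | [&& VF.2 \subset E, #|VF.1| == k, #|VF.2| == j &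
               [forall e in VF.2, e \subset VF.1]]].

Definition iso_subgraph (n : nat) (A B : {set 'I_n} * {set {set 'I_n}}) : bool :=
  [exists f : {ffun 'I_n -> 'I_n},
     [&& [forall x in A.1, forall y in A.1, (f x == f y) ==> (x == y)],
         f @: A.1 == B.1 &
         [set f @: e | e : {set 'I_n} in A.2] == B.2]].

Definition s_k (n : nat) (E : {set {set 'I_n}}) (k j : nat) : nat :=
  #|equivalence_partition (@iso_subgraph n) (subgraphs E k j)|.

(* Main.v *)
Require Import Defs.
From HB Require Import structures.
From mathcomp Require Import all_boot all_order all_algebra.
From mathcomp Require Import all_classical all_reals all_analysis.
From mathcomp Require Import ring lra.
Import Order.TTheory GRing.Theory Num.Theory.
Local Open Scope ring_scope.


Lemma sum_powerset_binom (R : comNzRingType) (T : finType) (B : {set T}) (x y : R) :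
  \sum_(A in powerset B) x ^+ #|A| * y ^+ (#|B| - #|A|) = (x + y) ^+ #|B|.
Proof.
rewrite (partition_big (fun A : {set T} => inord #|A| : 'I_(#|B|).+1) predT) //=.
rewrite addrC exprDn; apply: eq_bigr => i _.
have key : forall A : {set T}, (A \in powerset B) && (inord #|A| == i) =
                               (A \in [set A0 : {set T} | A0 \subset B & #|A0| == i]).
  move=> A; rewrite [in RHS]inE powersetE; case sAB: (A \subset B) => //=.
  have le : (#|A| <= #|B|)%N by apply: subset_leq_card.
  apply/eqP/eqP => [<-|Ai]; first by rewrite inordK.
  by apply/val_inj; rewrite /= inordK // Ai.
transitivity (\sum_(A in [set A : {set T} | A \subset B & #|A| == i]) x ^+ i * y ^+ (#|B| - i)).
  apply: eq_big => A; first exact: key.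
  by rewrite key inE => /andP[_ /eqP ->].
by rewrite sumr_const cards_draws mulrC.
Qed.



Lemma sum_sup (R : comNzRingType) (T : finType) (P F : {set T}) (p : R) :
  F \subset P ->
  \sum_(E in powerset P | F \subset E) p ^+ #|E| * (1 - p) ^+ (#|P| - #|E|)
  = p ^+ #|F|.
Proof.
move=> sFP.
set D := powerset (P :\: F).
have inj : {in D &, injective (fun E' : {set T} => F :|: E')}.
  move=> E1 E2; rewrite !inE => s1 s2 e.
  have h : forall E' : {set T}, E' \subset P :\: F -> (F :|: E') :\: F = E'.
    move=> E' sE; rewrite finset.setDUl finset.setDv finset.set0U; apply/finset.setDidPl.
    rewrite finset.disjoints_subset; apply: (fintype.subset_trans sE).
    by apply/fintype.subsetP => z; rewrite !inE => /andP[].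
  by rewrite -(h _ s1) -(h _ s2) e.
have img : [set E in powerset P | F \subset E] = (fun E' : {set T} => F :|: E') @: D.
  apply/setP => E; rewrite !inE; apply/idP/imsetP.
    case/andP => sEP sFE; exists (E :\: F).
      by rewrite inE; apply: finset.setSD.
    apply/setP => z; rewrite !inE; case: (boolP (z \in F)) => //= zF.
    by rewrite (fintype.subsetP sFE).
  case=> E' ; rewrite inE => sE' ->; rewrite finset.subsetUl andbT finset.subUset sFP /=.
  by apply: (fintype.subset_trans sE'); apply: finset.subsetDl.
have cP : #|P| = (#|F| + #|P :\: F|)%N.
  by rewrite cardsDS // subnKC // subset_leq_card.
transitivity (\sum_(E in [set E in powerset P | F \subset E])
    p ^+ #|E| * (1 - p) ^+ (#|P| - #|E|)).
  by apply: eq_bigl => E; rewrite !inE.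
rewrite img big_imset //=.
transitivity (\sum_(E' in D) p ^+ #|F| * (p ^+ #|E'| * (1 - p) ^+ (#|P :\: F| - #|E'|))).
  apply: eq_bigr => E'; rewrite inE => sE'.
  have dj : F :&: E' = finset.set0.
    apply/eqP; rewrite finset.setI_eq0 disjoint_sym finset.disjoints_subset; apply: (fintype.subset_trans sE').
    by apply/fintype.subsetP => z; rewrite !inE => /andP[].
  have -> : #|F :|: E'| = (#|F| + #|E'|)%N.
    by rewrite -cardsUI dj finset.cards0 addn0.
  by rewrite exprD mulrA cP subnDl.
by rewrite -big_distrr /= sum_powerset_binom addrC subrK expr1n mulr1.
Qed.



Definition Sall (n k j : nat) : {set {set 'I_n} * {set {set 'I_n}}} :=
  [set VF : {set 'I_n} * {set {set 'I_n}} | [&& #|VF.1| == k, #|VF.2| == j,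
     VF.2 \subset all_pairs n & [forall e in VF.2, e \subset VF.1]]].

Lemma card_Sall n k j : #|Sall n k j| = ('C(n, k) * 'C('C(k, 2), j))%N.
Proof.
pose Q (V : {set 'I_n}) := [set e : {set 'I_n} | e \subset V & #|e| == 2%N].
have eqQ : forall (V : {set 'I_n}) (F : {set {set 'I_n}}),
    (F \subset all_pairs n) && [forall e in F, e \subset V] = (F \subset Q V).
  move=> V F; apply/andP/fintype.subsetP.
    case=> /fintype.subsetP s1 /forall_inP s2 e eF.
    by rewrite inE s2 //=; have := s1 e eF; rewrite inE.
  move=> s; split.
    by apply/fintype.subsetP => e /s; rewrite !inE => /andP[].
  by apply/forall_inP => e /s; rewrite inE => /andP[].
rewrite -sum1_card.
rewrite (eq_bigl (fun p : {set 'I_n} * {set {set 'I_n}} => (#|p.1| == k) && ((#|p.2| == j) && (p.2 \subset Q p.1)))); last first.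
  by move=> [V F]; rewrite inE /= -eqQ.
rewrite -(pair_big_dep (fun V : {set 'I_n} => #|V| == k)
   (fun V (F : {set {set 'I_n}}) => (#|F| == j) && (F \subset Q V)) (fun _ _ => 1%N)) /=.
rewrite (eq_bigr (fun _ => 'C('C(k, 2), j))); last first.
  move=> V /eqP cV; rewrite sum1dep_card.
  have -> : [set F : {set {set 'I_n}} | (#|F| == j) && (F \subset Q V)] = [set F : {set {set 'I_n}} | F \subset Q V & #|F| == j].
    by apply/setP => F; rewrite !inE andbC.
  rewrite cards_draws; congr 'C(_, _).
  by rewrite cards_draws cV.
rewrite sum_nat_const; congr (_ * _)%N.
by rewrite -[in RHS](card_ord n) -(card_draws _ k) cardsE.
Qed.



Lemma leq_expr_mono (m n e : nat) : (m <= n)%N -> (m ^ e <= n ^ e)%N.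
Proof.
move=> mn; elim: e => [|e IH] //; rewrite !expnS; exact: leq_mul.
Qed.

Lemma ffact_le_exp (n m : nat) : (n ^_ m <= n ^ m)%N.
Proof.
elim: m n => [|m IH] n //; rewrite ffactnS expnS leq_mul //.
apply: leq_trans (IH _) _; apply: leq_expr_mono; exact: leq_pred.
Qed.

Lemma bin_fact_le (n m : nat) : ('C(n, m) * m`! <= n ^ m)%N.
Proof. by rewrite bin_ffact ffact_le_exp. Qed.

Lemma bin2_le (k : nat) : ('C(k, 2) * 2 <= k * k)%N.
Proof.
rewrite bin2 muln2 halfK; apply: leq_trans (leq_subr _ _) _.
by rewrite leq_mul // leq_pred.
Qed.

Lemma key_nat (n k j : nat) : (k <= n)%N -> (k <= j)%N ->
  ('C(n, k) * k`! * ('C('C(k, 2), j) * j`! * 2 ^ j) <= k ^ k * k ^ j * n ^ j)%N.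
Proof.
move=> kn kj.
apply: (@leq_trans (n ^ k * (k * k) ^ j)).
  apply: leq_mul; first exact: bin_fact_le.
  apply: (@leq_trans ('C(k, 2) ^ j * 2 ^ j)).
    by rewrite leq_mul // bin_fact_le.
  by rewrite -expnMn leq_expr_mono // bin2_le.
rewrite expnMn -(subnKC kj) !expnD.
set t := (j - k)%N.
have h1 : (k ^ t <= n ^ t)%N by apply: leq_expr_mono.
have -> : (n ^ k * (k ^ k * k ^ t * (k ^ k * k ^ t)) =
    (n ^ k * k ^ k * k ^ k * k ^ t) * k ^ t)%N by rewrite !mulnA; ring.
have -> : (k ^ k * (k ^ k * k ^ t) * (n ^ k * n ^ t) =
    (n ^ k * k ^ k * k ^ k * k ^ t) * n ^ t)%N by rewrite !mulnA; ring.
by rewrite leq_mul.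
Qed.



Lemma pow_fact_le_exp (R : realType) (x : R) (m : nat) : 0 <= x -> (0 < m)%N ->
  x ^+ m / m`!%:R <= expR x.
Proof.
move=> x0; case: m => [//|m] _.
apply: le_trans (expR_ge1Dxn m x0); by rewrite lerDr.
Qed.

Lemma real_bound (R : realType) (d : R) (n k j : nat) :
  0 <= d -> (1 <= n)%N -> (1 <= k)%N -> (k <= j)%N ->
  ('C(n, k) * 'C('C(k, 2), j))%:R * (d / n%:R) ^+ j <= expR (1 + d / 2) ^+ k.
Proof.
move=> d0 n1 k1 kj.
have [nk|kn] := ltnP n k.
  by rewrite bin_small // mul0n mul0r exprn_ge0 // expR_ge0.
have nz1 : (k`!%:R : R) != 0 by rewrite pnatr_eq0 -lt0n fact_gt0.
have nz2 : (j`!%:R : R) != 0 by rewrite pnatr_eq0 -lt0n fact_gt0.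
have nz3 : (n%:R : R) != 0 by rewrite pnatr_eq0 -lt0n.
set D := (k`! * j`! * 2 ^ j * n ^ j)%N.
have Dnz : (D%:R : R) != 0.
  by rewrite pnatr_eq0 /D !muln_eq0 !negb_or -!lt0n fact_gt0 fact_gt0 !expn_gt0 n1.
have D0 : 0 <= d ^+ j / D%:R by rewrite divr_ge0 // exprn_ge0.
apply: (@le_trans _ _ ((k%:R ^+ k / k`!%:R) * ((k%:R * d / 2) ^+ j / j`!%:R))).
  have -> : ('C(n, k) * 'C('C(k, 2), j))%:R * (d / n%:R) ^+ j =
     ('C(n, k) * k`! * ('C('C(k, 2), j) * j`! * 2 ^ j))%:R * (d ^+ j / D%:R) :> R.
    rewrite /D !natrM !natrX !exprMn !exprVn; field.
    by rewrite nz1 nz2 !expf_neq0 // pnatr_eq0.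
  have -> : (k%:R ^+ k / k`!%:R) * ((k%:R * d / 2) ^+ j / j`!%:R) =
     (k ^ k * k ^ j * n ^ j)%:R * (d ^+ j / D%:R) :> R.
    rewrite /D !natrM !natrX !exprMn !exprVn; field.
    by rewrite nz1 nz2 !expf_neq0 // pnatr_eq0.
  by rewrite ler_wpM2r // ler_nat key_nat.
have k0 : (0 : R) <= k%:R by rewrite ler0n.
apply: (@le_trans _ _ (expR k%:R * expR (k%:R * d / 2))).
  apply: ler_pM.
  - by rewrite divr_ge0 // exprn_ge0.
  - by rewrite divr_ge0 // exprn_ge0 // divr_ge0 // mulr_ge0.
  - by apply: pow_fact_le_exp.
  - apply: pow_fact_le_exp; first by rewrite divr_ge0 // mulr_ge0.
    exact: leq_trans kj.
by rewrite -expRD -expRM_natl mulrDr mulr1 mulrA.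
Qed.



Lemma sk_le (n : nat) (E : {set {set 'I_n}}) k j :
  (s_k E k j <= #|subgraphs E k j|)%N.
Proof. by rewrite /s_k /equivalence_partition leq_imset_card. Qed.

Lemma subgraphsE (n : nat) (E : {set {set 'I_n}}) k j :
  E \subset all_pairs n ->
  subgraphs E k j = [set VF in Sall n k j | VF.2 \subset E].
Proof.
move=> sE; apply/setP => [[V F]]; rewrite !inE /=.
case sFE: (F \subset E); rewrite ?andbF //= andbT.
by rewrite (fintype.subset_trans sFE sE) /=.
Qed.

Theorem mainTheorem11 (R : realType) (d : R) :
  0 <= d ->
  exists beta : R,
    forall n k j : nat,
      (1 <= n)%N -> d <= n%:R -> (2 <= k)%N ->
      1 + (ln (k%:R : R))^-1 <= j%:R / k%:R ->
      @gnp_prob R n (d / n%:R) (fun E => beta ^+ k <= (s_k E k j)%:R)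
        <= (2 : R) ^- k.
Proof.
move=> d0; exists (2 * expR (1 + d / 2)) => n k j n1 dn k2 hj.
have k0 : (0 : R) < k%:R by rewrite ltr0n; apply: leq_trans k2.
have kj : (k <= j)%N.
  have lk : 0 < (ln (k%:R : R))^-1 by rewrite invr_gt0 ln_gt0 // ltr1n.
  have : 1 < j%:R / (k%:R : R) by apply: lt_le_trans hj; rewrite ltrDl.
  by rewrite ltr_pdivlMr // mul1r ltr_nat => /ltnW.
have n0 : (0 : R) < n%:R by rewrite ltr0n.
set p := d / n%:R.
have p0 : 0 <= p by rewrite divr_ge0 // ltW.
have p1 : p <= 1 by rewrite ler_pdivrMr // mul1r.
set P := all_pairs n.
set w := fun E : {set {set 'I_n}} => p ^+ #|E| * (1 - p) ^+ (#|P| - #|E|).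
have w0 : forall E, 0 <= w E.
  by move=> E; rewrite mulr_ge0 // exprn_ge0 // subr_ge0.
set b := (2 * expR (1 + d / 2)) ^+ k.
have b0 : 0 < b by rewrite exprn_gt0 // mulr_gt0 // expR_gt0.
rewrite /gnp_prob -/P.
apply: (@le_trans _ _ (\sum_(E in powerset P) w E * ((#|subgraphs E k j|)%:R / b))).
  rewrite big_mkcondr /=; apply: ler_sum => E _.
  case: ifP => hA.
    apply: ler_peMr; first exact: w0.
    rewrite ler_pdivlMr // mul1r; apply: le_trans hA _.
    by rewrite ler_nat sk_le.
  by rewrite mulr_ge0 // divr_ge0 // ltW.
have -> : \sum_(E in powerset P) w E * ((#|subgraphs E k j|)%:R / b)
    = (\sum_(E in powerset P) w E * (#|subgraphs E k j|)%:R) / b.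
  by rewrite big_distrl /=; apply: eq_bigr => E _; rewrite mulrA.
have -> : \sum_(E in powerset P) w E * (#|subgraphs E k j|)%:R
    = (#|Sall n k j|)%:R * p ^+ j.
  transitivity (\sum_(E in powerset P) \sum_(VF in Sall n k j)
      (if VF.2 \subset E then w E else 0)).
    apply: eq_bigr => E; rewrite powersetE => sE.
    rewrite subgraphsE // -sumr_const.
    rewrite (eq_bigl (fun VF => (VF \in Sall n k j) && (VF.2 \subset E))); last first.
      by move=> VF; rewrite inE.
    rewrite big_mkcondr big_distrr /=; apply: eq_bigr => VF _.
    by case: ifP; rewrite ?mulr1 ?mulr0.
  rewrite exchange_big /= mulr_natl -sumr_const.
  apply: eq_bigr => VF; rewrite inE => /and4P[_ /eqP cF sF _].
  rewrite -big_mkcondr /= sum_sup // cF //.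
rewrite ler_pdivrMr // card_Sall /b [(2 * _) ^+ k]exprMn mulrA mulVf ?mul1r; last first.
  by rewrite expf_neq0 // pnatr_eq0.
apply: real_bound => //; exact: leq_trans k2.
Qed.
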